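(* Let $n\ge2$, and let $m$ and $I$ be as follows: $n-1=\sum_{i=0}^m p_i2^i$ with $p_i\in\{0,1\}$, $p_m=1$, $I=\{i\mid p_i=1\}$. (1) The finite set of formulas $\{\,y_0\equiv\neg q_{1/n},\ \bigwedge_{i=1}^m (y_i\equiv y_{i-1}^2),\ q_{1/n}\equiv\prod_{i\in I}y_i\,\}$ implicitly defines $1/n$ in the variable $q_{1/n}$ in the standard MV-algebra $[0,1]_{\text{Ł}}$ (i.e. it is satisfiable there, and every valuation giving all its members value $1$ gives $q_{1/n}$ value $1/n$). (2) The size of this set of formulas is polynomial in the binary size of $n$ (i.e. in $\log n$).
   Context: Standard MV-algebra $[0,1]_{\text{Ł}}$: $x\cdot y=\max(0,x+y-1)$, $\neg x=1-x$, $x\land y=\min(x,y)$, $x\equiv y=1-|x-y|$. Powers and $\prod$ refer to $\cdot$. $q_{1/n},y_0,\dots,y_m$ are distinct propositional variables. *)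

(* Defs.v *)
From Stdlib Require Import Reals Lra Lia Arith List.
Import ListNotations.
Open Scope R_scope.

Inductive var : Type :=
| VQ : var
| VY : nat -> var.

Inductive form : Type :=
| FVar  : var -> form
| FTop  : form
| FNeg  : form -> form
| FMul  : form -> form -> form
| FMeet : form -> form -> form
| FEqv  : form -> form -> form.

Fixpoint eval (e : var -> R) (f : form) : R :=
  match f with
  | FVar v => e v
  | FTop => 1
  | FNeg g => 1 - eval e g
  | FMul g h => Rmax 0 (eval e g + eval e h - 1)
  | FMeet g h => Rmin (eval e g) (eval e h)
  | FEqv g h => 1 - Rabs (eval e g - eval e h)
  end.

Definition valuation (e : var -> R) : Prop := forall v, 0 <= e v <= 1.

Fixpoint big_meet (l : list form) : form :=
  match l with
  | [] => FTop
  | [f] => f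
  | f :: l' => FMeet f (big_meet l')
  end.

Fixpoint big_mul (l : list form) : form :=
  match l with
  | [] => FTop
  | [f] => f
  | f :: l' => FMul f (big_mul l')
  end.

(* Binary expansion of n-1: p_i = testbit (n-1) i, m = floor(log2 (n-1)),
   I = { i <= m | p_i = 1 }. *)
Definition mm (n : nat) : nat := Nat.log2 (n - 1).
Definition II (n : nat) : list nat :=
  filter (fun i => Nat.testbit (n - 1) i) (seq 0 (S (mm n))).

Definition y (i : nat) : form := FVar (VY i).
Definition q : form := FVar VQ.

Definition Phi (n : nat) : list form :=
  [ FEqv (y 0) (FNeg q);
    big_meet (map (fun i => FEqv (y i) (FMul (y (i - 1)) (y (i - 1))))
                  (seq 1 (mm n)));
    FEqv q (big_mul (map y (II n))) ].

Definition implicitly_defines (Gamma : list form) (r : R) (v : var) : Prop :=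
  (exists e, valuation e /\ forall f, In f Gamma -> eval e f = 1) /\
  (forall e, valuation e -> (forall f, In f Gamma -> eval e f = 1) -> e v = r).

(* Size of a formula: number of symbols, where a variable y_i costs
   1 + (number of binary digits of its index). *)
Definition var_size (v : var) : nat :=
  match v with VQ => 1%nat | VY i => S (Nat.log2 (S i)) end.

Fixpoint fsize (f : form) : nat :=
  match f with
  | FVar v => var_size v
  | FTop => 1
  | FNeg g => S (fsize g)
  | FMul g h | FMeet g h | FEqv g h => S (fsize g + fsize h)
  end.

Definition set_size (l : list form) : nat := fold_right (fun f s => fsize f + s)%nat 0%nat l.

(* Main.v *)
Require Import Defs.
From Stdlib Require Import Reals Lra Lia Arith List.
Open Scope R_scope.
Import ListNotations.

Ltac rmx := unfold Rmax, Rmin in *; repeat match goal with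
  | |- context [Rle_dec ?a ?b] => destruct (Rle_dec a b)
  | H : context [Rle_dec ?a ?b] |- _ => destruct (Rle_dec a b) end.

Lemma eqv_one a b : 1 - Rabs (a - b) = 1 -> a = b.
Proof. intros H. split_Rabs; lra. Qed.

Lemma sq_step c : 0 <= c ->
  Rmax 0 (Rmax 0 (1 - c) + Rmax 0 (1 - c) - 1) = Rmax 0 (1 - 2 * c).
Proof. intros. rmx; lra. Qed.

Fixpoint rsum (l : list nat) (f : nat -> R) : R :=
  match l with [] => 0 | i :: l' => f i + rsum l' f end.

Fixpoint nsum (l : list nat) : nat :=
  match l with [] => 0%nat | i :: l' => (2 ^ i + nsum l')%nat end.

Lemma nsum_app l1 l2 : nsum (l1 ++ l2) = (nsum l1 + nsum l2)%nat.
Proof. induction l1; simpl; lia. Qed.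

Lemma bin a k : nsum (filter (Nat.testbit a) (seq 0 k)) = a mod 2 ^ k.
Proof.
  induction k.
  - simpl. symmetry. apply (Nat.mod_1_r a).
  - rewrite seq_S, filter_app, nsum_app, IHk. simpl.
    replace (2 ^ k + (2 ^ k + 0))%nat with (2 ^ k * 2)%nat by lia. rewrite Nat.Div0.mod_mul_r.
    rewrite <- Nat.testbit_spec'.
    destruct (Nat.testbit a k); simpl; lia.
Qed.

Lemma nsum_II n : (2 <= n)%nat -> nsum (II n) = (n - 1)%nat.
Proof.
  intros Hn. unfold II, mm. rewrite bin. apply Nat.mod_small.
  apply Nat.log2_spec. lia.
Qed.

Lemma rsum_INR l : rsum l (fun i => 2 ^ i) = INR (nsum l).
Proof.
  induction l; simpl; [reflexivity|].
  rewrite plus_INR, pow_INR, IHl. replace (INR 2) with 2 by (simpl; ring). ring.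
Qed.

Lemma rsum_ext l f g : (forall i, In i l -> f i = g i) -> rsum l f = rsum l g.
Proof.
  induction l; simpl; intros H; [reflexivity|].
  rewrite H by auto. rewrite IHl by auto. reflexivity.
Qed.

Lemma rsum_scal l f x : rsum l (fun i => f i * x) = rsum l f * x.
Proof. induction l; simpl; [ring|]. rewrite IHl. ring. Qed.

Lemma rsum_nn l f : (forall i, In i l -> 0 <= f i) -> 0 <= rsum l f.
Proof. induction l; simpl; intros H; [lra|]. assert (A := H a (or_introl eq_refl)).
 assert (0 <= rsum l f) by auto. lra. Qed.

Lemma evalMul e a b : eval e (FMul a b) = Rmax 0 (eval e a + eval e b - 1).
Proof. reflexivity. Qed.

Lemma big_mul_eval e l : (forall i, In i l -> 0 <= e (VY i) <= 1) ->
  eval e (big_mul (map y l)) = Rmax 0 (1 - rsum l (fun i => 1 - e (VY i))).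
Proof.
  induction l as [|i l IH]; intros H.
  - simpl. rmx; lra.
  - assert (Hi := H i (or_introl eq_refl)).
    assert (IH' := IH (fun j Hj => H j (or_intror Hj))).
    destruct l as [|j l'].
    + simpl. unfold y; simpl. rmx; lra.
    + change (eval e (FMul (y i) (big_mul (map y (j :: l'))))
        = Rmax 0 (1 - ((1 - e (VY i)) + rsum (j :: l') (fun i => 1 - e (VY i))))).
      rewrite evalMul, IH'. unfold y. simpl eval.
      assert (0 <= rsum (j :: l') (fun i => 1 - e (VY i))).
      { apply rsum_nn. intros k Hk. assert (HH := H k (or_intror Hk)). lra. }
      rmx; lra.
Qed.

Lemma list_lemma l c : (forall i, 0 <= c i) ->
  Rmax 0 (1 - rsum l (fun i => 1 - Rmax 0 (1 - c i))) = Rmax 0 (1 - rsum l c) /\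
  0 <= rsum l (fun i => 1 - Rmax 0 (1 - c i)) /\ 0 <= rsum l c.
Proof.
  intros Hc. induction l as [|i l IH]; simpl.
  - lra.
  - destruct IH as [E [S1 S2]]. assert (Hi := Hc i).
    split; [|split]; rmx; lra.
Qed.

Lemma meet_one e l : (forall g, In g l -> eval e g <= 1) ->
  1 <= eval e (big_meet l) -> forall g, In g l -> eval e g = 1.
Proof.
  induction l as [|g l IH]; intros Hle H1 h Hh; [destruct Hh|].
  destruct l as [|g' l'].
  - destruct Hh as [<-|[]]. simpl in H1. specialize (Hle g (or_introl eq_refl)). lra.
  - change (1 <= Rmin (eval e g) (eval e (big_meet (g' :: l')))) in H1.
    assert (A := Rmin_l (eval e g) (eval e (big_meet (g' :: l')))).
    assert (B := Rmin_r (eval e g) (eval e (big_meet (g' :: l')))).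
    destruct Hh as [<-|Hh].
    + specialize (Hle g (or_introl eq_refl)). lra.
    + apply IH; [intros k Hk; apply Hle; right; exact Hk| lra | exact Hh].
Qed.

Lemma meet_one' e l : (forall g, In g l -> eval e g = 1) -> eval e (big_meet l) = 1.
Proof.
  induction l as [|g l IH]; intros H; [reflexivity|].
  destruct l as [|g' l'].
  - apply H; left; auto.
  - change (Rmin (eval e g) (eval e (big_meet (g' :: l'))) = 1).
    rewrite IH by (intros k Hk; apply H; right; exact Hk). rewrite H by (left; auto). unfold Rmin; destruct Rle_dec; lra.
Qed.

Lemma II_le n i : In i (II n) -> (i <= mm n)%nat.
Proof. unfold II. intros H. apply filter_In in H. destruct H as [H _].
  apply in_seq in H. lia. Qed.

Lemma mul_key n e : (2 <= n)%nat -> 0 <= e VQ ->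
  (forall i, (i <= mm n)%nat -> e (VY i) = Rmax 0 (1 - 2 ^ i * e VQ)) ->
  eval e (big_mul (map y (II n))) = Rmax 0 (1 - e VQ * (INR n - 1)).
Proof.
  intros Hn Hx Hy.
  assert (Hc : forall i, 0 <= 2 ^ i * e VQ).
  { intros i. apply Rmult_le_pos; [apply pow_le; lra|lra]. }
  rewrite big_mul_eval.
  2:{ intros i Hi. rewrite Hy by (apply II_le; auto). specialize (Hc i). rmx; lra. }
  rewrite (rsum_ext _ _ (fun i => 1 - Rmax 0 (1 - 2 ^ i * e VQ))).
  2:{ intros i Hi. rewrite Hy by (apply II_le; auto). reflexivity. }
  destruct (list_lemma (II n) (fun i => 2 ^ i * e VQ) Hc) as [E _].
  rewrite E, rsum_scal, rsum_INR, nsum_II by auto.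
  rewrite minus_INR by lia. simpl (INR 1). f_equal. ring.
Qed.

Lemma big_meet_size l B : (forall g, In g l -> (fsize g <= B)%nat) ->
  (fsize (big_meet l) <= length l * S B + 1)%nat.
Proof.
  induction l as [|g l IH]; intros H; [simpl; lia|].
  assert (Hg := H g (or_introl eq_refl)).
  assert (IH' := IH (fun k Hk => H k (or_intror Hk))).
  destruct l as [|g' l']; [simpl; lia|].
  change (S (fsize g + fsize (big_meet (g' :: l'))) <= length (g :: g' :: l') * S B + 1)%nat.
  simpl length in *. nia.
Qed.

Lemma big_mul_size l B : (forall g, In g l -> (fsize g <= B)%nat) ->
  (fsize (big_mul l) <= length l * S B + 1)%nat.
Proof.
  induction l as [|g l IH]; intros H; [simpl; lia|].
  assert (Hg := H g (or_introl eq_refl)).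
  assert (IH' := IH (fun k Hk => H k (or_intror Hk))).
  destruct l as [|g' l']; [simpl; lia|].
  change (S (fsize g + fsize (big_mul (g' :: l'))) <= length (g :: g' :: l') * S B + 1)%nat.
  simpl length in *. nia.
Qed.

Lemma vs_le i : (var_size (VY i) <= S i)%nat.
Proof. simpl. pose proof (Nat.log2_lt_lin (S i)). lia. Qed.

Theorem lemma4p2 :
  (forall n : nat, (2 <= n)%nat -> implicitly_defines (Phi n) (1 / INR n) VQ) /\
  (exists c k : nat, forall n : nat, (2 <= n)%nat ->
     (set_size (Phi n) <= c * (Nat.log2 n + 1) ^ k)%nat).
Proof.
  split.
  - intros n Hn.
    assert (Hn2 : 2 <= INR n) by (replace 2 with (INR 2) by (simpl; ring); apply le_INR; lia).
    split.
    + set (x := 1 / INR n).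
      assert (Hx : 0 <= x <= 1/2).
      { unfold x. split. apply Rlt_le, Rdiv_lt_0_compat; lra.
        apply Rmult_le_reg_r with (INR n); [lra|]. unfold Rdiv. rewrite Rmult_assoc, Rinv_l by lra. nra. }
      exists (fun v => match v with VQ => x | VY i => Rmax 0 (1 - 2 ^ i * x) end).
      assert (Hc : forall i, 0 <= 2 ^ i * x).
      { intros i. apply Rmult_le_pos; [apply pow_le; lra|lra]. }
      split.
      { intros [|i]; [lra|]. specialize (Hc i). rmx; lra. }
      intros f Hf. destruct Hf as [<-|[<-|[<-|[]]]].
      * simpl. replace (1 - 1 * x) with (1 - x) by ring. rmx; split_Rabs; lra.
      * apply meet_one'. intros g Hg. apply in_map_iff in Hg.
        destruct Hg as [i [<- Hi]]. apply in_seq in Hi.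
        destruct i as [|i]; [lia|]. simpl. rewrite Nat.sub_0_r.
        rewrite sq_step by apply Hc. rewrite Rmult_assoc. 
        replace (Rmax 0 (1 - 2 * (2 ^ i * x)) - Rmax 0 (1 - 2 * (2 ^ i * x))) with 0 by ring.
        rewrite Rabs_R0. ring.
      * change (1 - Rabs (x - eval (fun v => match v with VQ => x | VY i => Rmax 0 (1 - 2 ^ i * x) end) (big_mul (map y (II n)))) = 1).
        rewrite mul_key; auto; [|simpl; lra].
        simpl. replace (1 - x * (INR n - 1)) with x by (unfold x; field; lra).
        rmx; split_Rabs; lra.
    + intros e He H.
      assert (Hx := He VQ).
      assert (H1 := H _ (or_introl eq_refl)).
      assert (H2 := H _ (or_intror (or_introl eq_refl))).
      assert (H3 := H _ (or_intror (or_intror (or_introl eq_refl)))).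
      simpl in H1. apply eqv_one in H1.
      assert (Hst : forall i, (1 <= i <= mm n)%nat ->
                e (VY i) = Rmax 0 (e (VY (i - 1)) + e (VY (i - 1)) - 1)).
      { intros i Hi. apply eqv_one.
        refine (meet_one e (map (fun i : nat => FEqv (y i) (FMul (y (i - 1)) (y (i - 1)))) (seq 1 (mm n))) _ _ (FEqv (y i) (FMul (y (i - 1)) (y (i - 1)))) _).
        - intros g Hg. apply in_map_iff in Hg. destruct Hg as [j [<- _]].
          unfold y; cbn [eval]. match goal with |- 1 - Rabs ?a <= 1 => pose proof (Rabs_pos a) end. lra.
        - rewrite H2. lra.
        - apply in_map_iff. exists i. split; auto. apply in_seq. lia. }
      assert (Hy : forall i, (i <= mm n)%nat -> e (VY i) = Rmax 0 (1 - 2 ^ i * e VQ)).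
      { induction i as [|i IH]; intros Hi.
        - simpl. rewrite H1. rmx; lra.
        - rewrite Hst by lia. simpl (S i - 1)%nat. rewrite Nat.sub_0_r, IH by lia.
          rewrite sq_step by (apply Rmult_le_pos; [apply pow_le; lra|lra]).
          simpl. rewrite Rmult_assoc. reflexivity. }
      change (1 - Rabs (e VQ - eval e (big_mul (map y (II n)))) = 1) in H3.
      apply eqv_one in H3. rewrite mul_key in H3 by (auto; apply Hx).
      revert H3. rmx; intros H3.
      * field_simplify_eq; [|lra]. lra.
      * exfalso. rewrite H3 in n0. lra.
  - exists 20%nat, 2%nat. intros n Hn.
    set (m := mm n).
    assert (Hm : (m <= Nat.log2 n)%nat) by (apply Nat.log2_le_mono; lia).
    unfold set_size, Phi. cbn [fold_right].
    assert (A1 : (fsize (FEqv (y 0) (FNeg q)) = 4)%nat) by reflexivity.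
    assert (A2 : (fsize (big_meet (map (fun i : nat => FEqv (y i) (FMul (y (i - 1)) (y (i - 1))))
                  (seq 1 (mm n)))) <= m * S (3 * m + 3) + 1)%nat).
    { eapply Nat.le_trans; [apply big_meet_size with (B := (3 * m + 3)%nat)|].
      2:{ rewrite length_map, length_seq. lia. }
      intros g Hg. apply in_map_iff in Hg. destruct Hg as [i [<- Hi]]. apply in_seq in Hi.
      cbn [fsize y]. pose proof (vs_le i). pose proof (vs_le (i - 1)). lia. }
    assert (A3 : (fsize (FEqv q (big_mul (map y (II n)))) <= S (1 + (S m * S (S m) + 1)))%nat).
    { cbn [fsize]. simpl (var_size VQ).
      assert (fsize (big_mul (map y (II n))) <= length (map y (II n)) * S (S m) + 1)%nat.
      { apply big_mul_size. intros g Hg. apply in_map_iff in Hg. destruct Hg as [i [<- Hi]].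
        apply II_le in Hi. cbn [fsize y]. pose proof (vs_le i). fold m in Hi. lia. }
      rewrite length_map in H.
      assert (length (II n) <= S m)%nat.
      { unfold II. eapply Nat.le_trans; [apply filter_length_le|]. rewrite length_seq. unfold m; lia. }
      change (fsize q) with 1%nat. nia. }
    rewrite A1. 
    assert (Hsq : (S m * S m <= (Nat.log2 n + 1) ^ 2)%nat).
    { simpl. nia. }
    nia.
Qed.
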